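(* Under the standing assumptions, let $H$ and $L$ be wide subgroupoids of $\mathcal G$ such that $J_h\neq\{0\}$ for every $h\in H$ and $J_l\neq\{0\}$ for every $l\in L$. If $R^{\beta_H}=R^{\beta_L}$, then $H=L$.
   Context: All rings and algebras are associative and unital. A groupoid is a nonempty set $\mathcal G$ with a partially defined associative multiplication in which every $g$ has an inverse $g^{-1}$, a left identity $r(g)=gg^{-1}$ and a right identity $d(g)=g^{-1}g$; $gh$ is defined iff $d(g)=r(h)$; $\mathcal G_0$ is the set of identities. A subgroupoid is a nonempty subset closed under inverses and defined products; it is wide if it contains $\mathcal G_0$. Standing assumptions: $K$ commutative ring, $R$ a $K$-algebra, $\mathcal G$ a finite groupoid, $\beta=(\{E_g\},\{\beta_g\})$ a unital action of $\mathcal G$ on $R$: $E_g=E_{r(g)}$ is an ideal of $R$, unital with identity $1_g$ (so $1_{g^{-1}}=1_{d(g)}$), $\beta_g:E_{g^{-1}}\to E_g$ a $K$-algebra isomorphism, $\beta_e=\mathrm{id}_{E_e}$ for $e\in\mathcal G_0$, $\beta_g\beta_h(x)=\beta_{gh}(x)$ whenever $d(g)=r(h)$, $x\in E_{h^{-1}}$; $R=\bigoplus_{e\in\mathcal G_0}E_e$; and $R$ is a $\beta$-Galois extension of $R^\beta$: there exist $x_i,y_i\in R$ ($1\le i\le m$) with $\sum_i x_i\beta_g(y_i1_{g^{-1}})=1_g$ if $g\in\mathcal G_0$ and $=0$ otherwise. For a subgroupoid $H$, $R^{\beta_H}=\{r\in R:\beta_h(r1_{h^{-1}})=r1_h\ \forall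 h\in H\}$, and $R^\beta=R^{\beta_{\mathcal G}}$. For $g\in\mathcal G$, $J_g=\{r\in E_g: r\beta_g(x1_{g^{-1}})=xr\ \forall x\in R\}$. *)

(* Defs.v *)
From HB Require Import structures.
From mathcomp Require Import all_boot all_algebra.
Set Implicit Arguments. Unset Strict Implicit. Unset Printing Implicit Defensive.
Import GRing.Theory.
Local Open Scope ring_scope.

(* A finite groupoid on the carrier G : finType, given by domain d, range r,
   inverse inv and a multiplication mul (total function, only meaningful
   when d g = r h, i.e. when gh is defined). *)
Definition is_groupoid (G : finType) (d r inv : G -> G) (mul : G -> G -> G) : Prop :=
  (forall g h, d g = r h -> d (mul g h) = d h /\ r (mul g h) = r g) /\
      (forall g h k, d g = r h -> d h = r k -> mul (mul g h) k = mul g (mul h k)) /\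
      (forall g, d (d g) = d g /\ r (d g) = d g /\ d (r g) = r g /\ r (r g) = r g) /\
      (forall g, mul (r g) g = g /\ mul g (d g) = g) /\
      (forall g, d (inv g) = r g /\ r (inv g) = d g) /\
      (forall g, mul g (inv g) = r g /\ mul (inv g) g = d g).

Definition gid (G : finType) (d : G -> G) : {set G} := [set e | d e == e].

Definition subgroupoid (G : finType) (d r inv : G -> G) (mul : G -> G -> G)
    (H : {set G}) : Prop :=
  [/\ H != set0,
      (forall h, h \in H -> inv h \in H) &
      (forall g h, g \in H -> h \in H -> d g = r h -> mul g h \in H)].

Definition wide_subgroupoid (G : finType) (d r inv : G -> G) (mul : G -> G -> G)
    (H : {set G}) : Prop :=
  subgroupoid d r inv mul H /\ gid d \subset H.

Definition is_ideal (R : pzRingType) (E : R -> Prop) : Prop :=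
  [/\ E 0, (forall x y, E x -> E y -> E (x - y)) &
      (forall a x, E x -> E (a * x) /\ E (x * a))].

(* unital action beta = ({E_g}, {beta_g}) of the groupoid on the K-algebra R,
   with 1_g = one g the identity of E_g, and R = (+)_{e in G_0} E_e *)
Definition unital_action (K : comPzRingType) (R : algType K) (G : finType)
    (d r inv : G -> G) (mul : G -> G -> G)
    (E : G -> R -> Prop) (one : G -> R) (beta : G -> R -> R) : Prop :=
  (forall g x, E g x <-> E (r g) x) /\
      (forall g, is_ideal (E g)) /\
      (forall g, E g (one g) /\ forall x, E g x -> one g * x = x /\ x * one g = x) /\
      (forall g,
         (forall x, E (inv g) x -> E g (beta g x)) /\
         (forall x y, E (inv g) x -> E (inv g) y -> beta g (x + y) = beta g x + beta g y) /\
         (forall x y, E (inv g) x -> E (inv g) y -> beta g (x * y) = beta g x * beta g y) /\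
         (forall (k : K) x, E (inv g) x -> beta g (k *: x) = k *: beta g x) /\
         (forall x y, E (inv g) x -> E (inv g) y -> beta g x = beta g y -> x = y) /\
         (forall y, E g y -> exists2 x, E (inv g) x & beta g x = y)) /\
      (forall e x, e \in gid d -> E e x -> beta e x = x) /\
      (forall g h x, d g = r h -> E (inv h) x -> beta g (beta h x) = beta (mul g h) x) /\
      ((forall x : R, exists f : G -> R,
          (forall e, e \in gid d -> E e (f e)) /\ x = \sum_(e in gid d) f e) /\
       (forall f : G -> R, (forall e, e \in gid d -> E e (f e)) ->
          \sum_(e in gid d) f e = 0 -> forall e, e \in gid d -> f e = 0)).

Definition galois_ext (K : comPzRingType) (R : algType K) (G : finType)
    (d inv : G -> G) (one : G -> R) (beta : G -> R -> R) : Prop :=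
  exists m (x y : 'I_m -> R), forall g,
    \sum_(i < m) x i * beta g (y i * one (inv g)) =
      (if g \in gid d then one g else 0).

Definition fixed_ring (K : comPzRingType) (R : algType K) (G : finType)
    (inv : G -> G) (one : G -> R) (beta : G -> R -> R) (H : {set G}) (a : R) : Prop :=
  forall h, h \in H -> beta h (a * one (inv h)) = a * one h.

Definition Jset (K : comPzRingType) (R : algType K) (G : finType)
    (inv : G -> G) (E : G -> R -> Prop) (one : G -> R) (beta : G -> R -> R)
    (g : G) (a : R) : Prop :=
  E g a /\ forall x : R, a * beta g (x * one (inv g)) = x * a.

(* Main.v *)
Require Import Defs.
From mathcomp Require Import all_boot all_algebra.
Local Open Scope ring_scope.
Import GRing.Theory.

Theorem lemma3p2 (K : comPzRingType) (R : algType K) (G : finType)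
    (d r inv : G -> G) (mul : G -> G -> G)
    (E : G -> R -> Prop) (one : G -> R) (beta : G -> R -> R)
    (H L : {set G}) :
  is_groupoid d r inv mul ->
  unital_action d r inv mul E one beta ->
  galois_ext d inv one beta ->
  wide_subgroupoid d r inv mul H ->
  wide_subgroupoid d r inv mul L ->
  (forall h, h \in H -> exists2 a, Jset inv E one beta h a & a <> 0) ->
  (forall l, l \in L -> exists2 a, Jset inv E one beta l a & a <> 0) ->
  (forall a, fixed_ring inv one beta H a <-> fixed_ring inv one beta L a) ->
  H = L.
Proof.
move=> [Hdr [Hass [Hid [Hunit [Hinvdr Hinvmul]]]]].
move=> [ER [Eid [Eone [Ebeta [Bid [Bcomp [Dec1 Dec2]]]]]]].
move=> [m [x [y Gal]]].
have rgid : forall g, r g \in gid d.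
  by move=> g; rewrite inE; have [_ [_ [-> _]]] := Hid g.
have E0 : forall g, E g 0 by move=> g; have [] := Eid g.
have EmulL : forall g u v, E g u -> E g (v * u).
  by move=> g u v Hu; have [_ _ h] := Eid g; have [] := h v u Hu.
have EmulR : forall g u v, E g u -> E g (u * v).
  by move=> g u v Hu; have [_ _ h] := Eid g; have [] := h v u Hu.
have Esub : forall g u v, E g u -> E g v -> E g (u - v).
  by move=> g u v Hu Hv; have [_ h _] := Eid g; apply: h.
have Eopp : forall g u, E g u -> E g (- u).
  by move=> g u Hu; rewrite -sub0r; apply: Esub.
have Eadd : forall g u v, E g u -> E g v -> E g (u + v).
  by move=> g u v Hu Hv; rewrite -(opprK v); apply: Esub => //; apply: Eopp.
have Erew : forall g g' u, r g = r g' -> E g u -> E g' u.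
  by move=> g g' u e Hu; apply/(ER g' u); rewrite -e; apply/(ER g u).
have onerg : forall g, one g = one (r g).
  move=> g; have [Eg1 Eg1id] := Eone g; have [Er1 Er1id] := Eone (r g).
  have h1 := (Er1id _ ((ER g (one g)).1 Eg1)).1.
  have h2 := (Eg1id _ ((ER g (one (r g))).2 Er1)).2.
  by rewrite -h1 h2.
have oneL : forall g u, E g u -> one g * u = u.
  by move=> g u Hu; have [_ h] := Eone g; have [] := h u Hu.
have oneR : forall g u, E g u -> u * one g = u.
  by move=> g u Hu; have [_ h] := Eone g; have [] := h u Hu.
have Eone' : forall g, E g (one g) by move=> g; have [] := Eone g.
have orth : forall e e' z, e \in gid d -> e' \in gid d -> e != e' ->
    E e z -> E e' z -> z = 0.
  move=> e e' z He He' nee Ez Ez'.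
  pose f k := if k == e then z else if k == e' then - z else 0.
  have hf : forall k, k \in gid d -> E k (f k).
    move=> k _; rewrite /f; case: eqP => [->//|_]; case: eqP => [->|_]; last exact: E0.
    exact: Eopp.
  have := Dec2 f hf.
  rewrite (bigD1 e) //= (bigD1 e') /=; last by rewrite He' eq_sym.
  rewrite big1; last first.
    by move=> k /andP [/andP [_ /negPf ne] /negPf ne']; rewrite /f ne ne'.
  rewrite /f eqxx [e' == e]eq_sym (negPf nee) eqxx addr0 subrr.
  by move=> /(_ (erefl _) e He); rewrite eqxx.

have gidd : forall e, e \in gid d -> d e = e by move=> e; rewrite inE => /eqP.
have gidr : forall e, e \in gid d -> r e = e.
  by move=> e He; have [_ [h _]] := Hid e; rewrite -{1}(gidd e He) h gidd.
have prod0 : forall g g' u v, r g != r g' -> E g u -> E g' v -> u * v = 0.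
  move=> g g' u v ne Hu Hv; apply: (orth (r g) (r g')) => //.
    by apply: (ER g _).1; apply: EmulR.
  by apply: (ER g' _).1; apply: EmulL.
have mulone : forall g g' u, E g u -> u * one g' = if r g == r g' then u else 0.
  move=> g g' u Hu; case: eqP => e; first by apply: oneR; exact: Erew e Hu.
  by apply: (prod0 g g') => //; apply/eqP.
have sum_one : \sum_(e in gid d) one e = 1.
  have [f [hf e1]] := Dec1 1; rewrite e1; apply: eq_bigr => e He.
  rewrite -[one e]mulr1 e1 mulr_sumr (bigD1 e) //= big1 ?addr0; first exact: oneL (hf e He).
  move=> k /andP [Hk nk]; apply: (prod0 e k); last exact: hf.
    by rewrite gidr // gidr // eq_sym.
  exact: Eone'.
have beta0 : forall g, beta g 0 = 0.
  move=> g; have [_ [hadd _]] := Ebeta g.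
  have h := hadd 0 0 (E0 _) (E0 _); rewrite addr0 in h.
  by apply: (addrI (beta g 0)); rewrite -h addr0.
have beta_sum : forall g (I : Type) (s : seq I) (P : pred I) (F : I -> R),
    (forall i, P i -> E (inv g) (F i)) ->
    E (inv g) (\sum_(i <- s | P i) F i) /\
    beta g (\sum_(i <- s | P i) F i) = \sum_(i <- s | P i) beta g (F i).
  move=> g I s P F hF.
  apply: (big_rec2 (fun u v => E (inv g) u /\ beta g u = v)).
    by split; [exact: E0 | exact: beta0].
  move=> i y1 y2 Pi [Ey1 ey]; split; first by apply: Eadd => //; apply: hF.
  by have [_ [hadd _]] := Ebeta g; rewrite hadd ?ey //; apply: hF.
have Eterm : forall h z, E h (beta h (z * one (inv h))).
  by move=> h z; have [hb _] := Ebeta h; apply: hb; apply: EmulL; apply: Eone'.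
have fixtr : forall (H0 : {set G}), wide_subgroupoid d r inv mul H0 -> forall z,
    fixed_ring inv one beta H0 (\sum_(h in H0) beta h (z * one (inv h))).
  move=> H0 [[_ Hinv Hmul] Hsub] z h' hh'.
  rewrite !mulr_suml.
  rewrite [in LHS](eq_bigr (fun h => if r h == r (inv h') then beta h (z * one (inv h)) else 0)); last by move=> h _; apply: mulone.
  rewrite [RHS](eq_bigr (fun h => if r h == r h' then beta h (z * one (inv h)) else 0)); last by move=> h _; apply: mulone.
  rewrite -!big_mkcondr /=.
  have hyp : forall h, (h \in H0) && (r h == r (inv h')) -> E (inv h') (beta h (z * one (inv h))).
    by move=> h /andP [_ /eqP e]; apply: (Erew h) => //.
  rewrite (proj2 (beta_sum _ _ _ _ _ hyp)).
  rewrite [LHS](eq_bigr (fun h => beta (mul h' h) (z * one (inv (mul h' h))))); last first.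
    move=> h /andP [hh /eqP e].
    have dh : d h' = r h by rewrite e (proj2 (Hinvdr h')).
    rewrite Bcomp //; last by apply: EmulL; apply: Eone'.
    by rewrite onerg [one (inv (mul h' h))]onerg !(proj2 (Hinvdr _)) (proj1 (Hdr _ _ dh)).
  rewrite [RHS](reindex_onto (fun j => mul h' j) (fun k => mul (inv h') k)) /=; last first.
    move=> k /andP [hk /eqP ek].
    have c1 : d h' = r (inv h') by rewrite (proj2 (Hinvdr h')).
    have c2 : d (inv h') = r k by rewrite (proj1 (Hinvdr h')) ek.
    by rewrite -(Hass _ _ _ c1 c2) (proj1 (Hinvmul h')) -ek; exact: (proj1 (Hunit k)).
  apply: eq_bigl => j; apply/andP/andP.
    move=> [hj /eqP ej].
    have dj : d h' = r j by rewrite ej (proj2 (Hinvdr h')).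
    split; first (apply/andP; split).
    - exact: Hmul.
    - by rewrite (proj2 (Hdr _ _ dj)).
    - have c1 : d (inv h') = r h' by rewrite (proj1 (Hinvdr h')).
      by rewrite -(Hass _ _ _ c1 dj) (proj2 (Hinvmul h')) dj (proj1 (Hunit j)).
  move=> [/andP [hm /eqP em] /eqP ej].
  have cc : d (inv h') = r (mul h' j) by rewrite (proj1 (Hinvdr h')) em.
  split.
    by rewrite -ej; apply: Hmul => //; apply: Hinv.
  by rewrite -ej (proj2 (Hdr _ _ cc)).

have sub : forall H0 L0 : {set G}, wide_subgroupoid d r inv mul H0 ->
    (forall l, l \in L0 -> exists2 a, Jset inv E one beta l a & a <> 0) ->
    (forall a, fixed_ring inv one beta H0 a -> fixed_ring inv one beta L0 a) ->
    L0 \subset H0.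
  move=> H0 L0 wH JL fHL; apply/subsetP => l hl; apply/negPn/negP => nl.
  have [a [Ea Ja] an0] := JL l hl; apply: an0.
  have wH' := wH; move: wH => [[_ Hinv Hmul] Hsub].
  pose c i := \sum_(h in H0) beta h (y i * one (inv h)).
  have cfix : forall i, beta l (c i * one (inv l)) = c i * one l.
    by move=> i; apply: (fHL _ (fixtr H0 wH' (y i))).
  have sum1 : \sum_(i < m) x i * c i = 1.
    rewrite /c; under eq_bigr do rewrite mulr_sumr.
    rewrite exchange_big /=.
    rewrite (eq_bigr (fun h => if h \in gid d then one h else 0)); last by move=> h _; apply: Gal.
    rewrite -big_mkcondr -sum_one; apply: eq_bigl => h.
    by apply/andP/idP => [[]//|hg]; split => //; exact: (subsetP Hsub).
  have zero : \sum_(i < m) beta l (x i * one (inv l)) * c i = 0.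
    rewrite /c; under eq_bigr do rewrite mulr_sumr.
    rewrite exchange_big /=; apply: big1 => h hh.
    case: (eqVneq (r h) (r l)) => [erh | ne]; last first.
      apply: big1 => i _; apply: (prod0 l h); first by rewrite eq_sym.
        exact: Eterm.
      exact: Eterm.
    pose g := mul (inv l) h.
    have cg : d (inv l) = r h by rewrite (proj1 (Hinvdr l)) erh.
    have c1 : d l = r (inv l) by rewrite (proj2 (Hinvdr l)).
    have hlg : mul l g = h.
      by rewrite /g -(Hass _ _ _ c1 cg) (proj1 (Hinvmul l)) -erh (proj1 (Hunit h)).
    have dg : d g = d h := proj1 (Hdr _ _ cg).
    have rg : r g = d l by rewrite (proj2 (Hdr _ _ cg)) (proj2 (Hinvdr l)).
    have dlg : d l = r g by rewrite rg.
    have eone : one (inv h) = one (inv g).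
      by rewrite onerg [one (inv g)]onerg !(proj2 (Hinvdr _)) dg.
    have Egl : forall w, E g w -> E (inv l) w.
      by move=> w; apply: Erew; rewrite rg (proj2 (Hinvdr l)).
    have step : forall i, beta l (x i * one (inv l)) * beta h (y i * one (inv h)) =
        beta l (x i * one (inv l) * beta g (y i * one (inv g))).
      move=> i; rewrite eone -hlg.
      have Ew : E (inv g) (y i * one (inv g)) by apply: EmulL; apply: Eone'.
      rewrite -(Bcomp l g _ dlg Ew).
      have [_ [_ [hm _]]] := Ebeta l.
      rewrite [RHS]hm //; first by apply: EmulL; apply: Eone'.
      by apply: Egl; apply: Eterm.
    rewrite (eq_bigr _ (fun i _ => step i)).
    have hyp : forall i : 'I_m, true -> E (inv l) (x i * one (inv l) * beta g (y i * one (inv g))).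
      by move=> i _; apply: EmulR; apply: EmulL; apply: Eone'.
    rewrite -(proj2 (beta_sum _ _ _ _ _ hyp)).
    rewrite (eq_bigr (fun i => x i * beta g (y i * one (inv g)))); last first.
      by move=> i _; rewrite -mulrA oneL //; apply: Egl; apply: Eterm.
    rewrite Gal; case: ifP => gg; last exact: beta0.
    exfalso; move: nl; apply/negP/negPn.
    have gd : g = d l.
      have [_ [h2 _]] := Hid g; by rewrite -rg -{2}(gidd g gg) h2 gidd.
    by rewrite -(proj2 (Hunit l)) -gd hlg.
  have : a = a * (\sum_(i < m) beta l (x i * one (inv l)) * c i) * one l.
    rewrite -[LHS]mul1r -sum1 mulr_suml mulr_sumr mulr_suml; apply: eq_bigr => i _.
    rewrite -mulrA -Ja cfix mulrA -Ja.
    by rewrite !mulrA.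
  by move=> ->; rewrite zero mulr0 mul0r.
move=> wH wL JH JL Hfix.
apply/eqP; rewrite eqEsubset; apply/andP; split.
  by apply: (sub L H wL JH) => a h; apply/(Hfix a).
by apply: (sub H L wH JL) => a h; apply/(Hfix a).
Qed.
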